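(* Let $X$ be a real normed linear space and let $x\in X\setminus\{\theta\}$ be $\varepsilon$-smooth with $\varepsilon\in[0,2)$. Suppose $y_1,y_2\in X$ satisfy $\min\{\|y_1\|,\|y_2\|\}\le\left\|\frac{y_1+y_2}{2}\right\|$. If $x\perp_B y_1$ and $x\perp_B y_2$, then $x\perp_B^{\varepsilon/2}(y_1+y_2)$.
   Context: $x\perp_B y$ means $\|x+\lambda y\|\ge\|x\|$ for all $\lambda\in\mathbb{R}$. For $\delta\in[0,1)$, $x\perp_B^\delta y$ means $\|x+\lambda y\|^2\ge\|x\|^2-2\delta\|x\|\|\lambda y\|$ for all $\lambda\in\mathbb{R}$. For $x\neq\theta$, $J(x)=\{f\in S_{X^*}:f(x)=\|x\|\}$, and $x$ is $\varepsilon$-smooth if $\sup_{f,g\in J(x)}\|f-g\|\le\varepsilon$. *)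

(* Defs.v *)
From HB Require Import structures.
From mathcomp Require Import all_boot all_order all_algebra.
From mathcomp Require Import all_classical all_reals all_analysis.
Set Implicit Arguments. Unset Strict Implicit. Unset Printing Implicit Defensive.
Import Order.TTheory GRing.Theory Num.Theory.
Import numFieldNormedType.Exports.
Local Open Scope classical_set_scope.
Local Open Scope ring_scope.

Section Defs.
Variables (R : realType) (X : normedModType R).

Definition bdd_linear_functional (f : X -> R) : Prop :=
  (forall (a : R) (u v : X), f (a *: u + v) = a * f u + f v) /\
  exists C : R, forall v : X, `|f v| <= C * `|v|.

Definition dual_norm (f : X -> R) : R :=
  sup [set `|f v| | v in [set v : X | `|v| <= 1]].

Definition supp_funcs (x : X) : set (X -> R) :=
  [set f | bdd_linear_functional f /\ dual_norm f = 1 /\ f x = `|x|].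

Definition eps_smooth (x : X) (eps : R) : Prop :=
  forall f g, supp_funcs x f -> supp_funcs x g ->
    dual_norm (fun v => f v - g v) <= eps.

Definition BJ_orth (x y : X) : Prop :=
  forall lam : R, `|x| <= `|x + lam *: y|.

Definition BJ_orth_approx (delta : R) (x y : X) : Prop :=
  forall lam : R, `|x| ^+ 2 - 2 * delta * `|x| * `|lam *: y| <= `|x + lam *: y| ^+ 2.

End Defs.

(* Main.v *)
Require Import Defs.
From HB Require Import structures.
From mathcomp Require Import all_boot all_order all_algebra.
From mathcomp Require Import all_classical all_reals all_analysis.
From mathcomp Require Import lra ring.
Import Order.TTheory GRing.Theory Num.Theory.
Import numFieldNormedType.Exports.
Local Open Scope classical_set_scope.
Local Open Scope ring_scope.
Set Implicit Arguments. Unset Strict Implicit.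

Section HB.
Variables (R : realType) (X : normedModType R).

Definition cond (G : set (X * R)) :=
 [/\ (forall v a b, G (v,a) -> G (v,b) -> a = b),
     (forall c u a w b, G (u,a) -> G (w,b) -> G (c *: u + w, c * a + b)) &
     (forall v a, G (v,a) -> a <= `|v|)].

Variables (x y : X).
Hypothesis x0 : x != 0.
Hypothesis xy : BJ_orth x y.

Definition Bs : set (X * R) := [set p | exists a b : R, p = (a *: x + b *: y, a * `|x|)].

Lemma dom_B a b : a * `|x| <= `|a *: x + b *: y|.
Proof.
have [->|a0] := eqVneq a 0; first by rewrite mul0r.
have -> : a *: x + b *: y = a *: (x + (b / a) *: y).
  by rewrite scalerDr scalerA mulrCA divff // mulr1.
rewrite normrZ; apply: (le_trans (y := `|a| * `|x|)).
  by apply: ler_wpM2r => //; exact: ler_norm.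
by apply: ler_wpM2l => //; exact: xy.
Qed.

Lemma cond_B : cond Bs.
Proof.
split.
- move=> v _ _ [a [b [-> ->]]] [a' [b' [E ->]]].
  apply/eqP; rewrite -subr_eq0 -mulrBl mulf_eq0 normr_eq0 (negbTE x0) orbF subr_eq0.
  apply/negP => /negP aa.
  have : `|x| <= `|x + ((b' - b) / (a' - a)) *: y| by apply: xy.
  have -> : x + ((b' - b) / (a' - a)) *: y = 0.
    have aa' : a' - a != 0 by rewrite subr_eq0 eq_sym.
    apply: (@scalerI _ _ (a' - a)) => //.
    rewrite scaler0 scalerDr scalerA mulrCA divff // mulr1.
    by rewrite !scalerBl addrACA -opprD -E subrr.
  by rewrite normr0 normr_le0 (negbTE x0).
- move=> c u a' w b' [a1 [b1 [-> ->]]] [a2 [b2 [-> ->]]].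
  exists (c * a1 + a2), (c * b1 + b2); congr pair.
    by rewrite scalerDr !scalerA !scalerDl addrACA.
  by rewrite mulrDl mulrA.
- move=> v a [a1 [b1 [-> ->]]]; exact: dom_B.
Qed.

Definition PP (G : set (X * R)) := cond (G `|` Bs).

Lemma pick2 (F : set (set (X * R))) : total_on F subset ->
  forall p q, ((\bigcup_(S in F) S) `|` Bs) p -> ((\bigcup_(S in F) S) `|` Bs) q ->
  exists S, (S = set0 \/ F S) /\ (S `|` Bs) p /\ (S `|` Bs) q.
Proof.
move=> tot p q [[S1 FS1 p1]|pB] [[S2 FS2 q2]|qB].
- have [S12|S21] := tot _ _ FS1 FS2.
    by exists S2; split; [right|split; left=> //; apply: S12].
  by exists S1; split; [right|split; left=> //; apply: S21].
- by exists S1; split; [right|split; [left|right]].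
- by exists S2; split; [right|split; [right|left]].
- by exists set0; split; [left|split; right].
Qed.

Lemma union_cond (F : set (set (X * R))) : F `<=` PP -> total_on F subset ->
  PP (\bigcup_(S in F) S).
Proof.
move=> FP tot.
have cS : forall S, S = set0 \/ F S -> cond (S `|` Bs).
  move=> S [->|FS]; last exact: FP.
  by rewrite set0U; exact: cond_B.
have sub : forall S, S = set0 \/ F S -> S `|` Bs `<=` (\bigcup_(S in F) S) `|` Bs.
  move=> S [->|FS] p; first by rewrite set0U; right.
  by case=> [Sp|Bp]; [left; exists S|right].
split.
- move=> v a b h1 h2; have [S [HS [p1 p2]]] := pick2 tot h1 h2.
  by have [f _ _] := cS S HS; exact: f p1 p2.
- move=> c u a w b h1 h2; have [S [HS [p1 p2]]] := pick2 tot h1 h2.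
  apply: (sub S HS).
  by have [_ f _] := cS S HS; exact: f p1 p2.
- move=> v a h1; have [S [HS [p1 _]]] := pick2 tot h1 h1.
  by have [_ _ f] := cS S HS; exact: f p1.
Qed.

Lemma max_exists : exists A, cond A /\ Bs `<=` A /\
  forall A', cond A' -> A `<=` A' -> A' `<=` A.
Proof.
have [A [PA hmax]] := Zorn_bigcup union_cond.
have BA : Bs `<=` A.
  move=> p Bp; apply: boolp.contrapT => nAp.
  apply: (hmax (A `|` Bs)); last by rewrite /PP -setUA setUid.
  split; first exact: subsetUl.
  by move=> /(_ p (or_intror Bp)).
have cA : cond A by move: PA; rewrite /PP setUidl.
exists A; split=> //; split=> // A' cA' AA'.
move=> p A'p; apply: boolp.contrapT => nAp.
apply: (hmax A'); last by rewrite /PP setUidl //; exact: (subset_trans BA AA').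
split=> //; by move=> /(_ p A'p).
Qed.

Lemma total_dom A : cond A -> Bs `<=` A ->
  (forall A', cond A' -> A `<=` A' -> A' `<=` A) -> forall v, exists r, A (v, r).
Proof.
move=> [fA cA dA] BA hmax v; apply: boolp.contrapT => nv.
have A00 : A (0, 0).
  by apply: BA; exists 0, 0; rewrite !scale0r addr0 mul0r.
pose S := [set z | exists u a, A (u,a) /\ z = a - `|u - v|].
have key : forall u a w b, A (u,a) -> A (w,b) -> a - `|u - v| <= `|w + v| - b.
  move=> u a w b ha hb.
  have := dA _ _ (cA 1 _ _ _ _ ha hb); rewrite scale1r mul1r => h.
  have : `|u + w| <= `|u - v| + `|w + v|.
    rewrite (_ : u + w = (u - v) + (w + v)); first exact: ler_normD.
    by rewrite addrACA addNr addr0.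
  move: h; lra.
have ubS : has_ubound S.
  by exists (`|0 + v| - 0) => z [u [a [ha ->]]]; exact: key ha A00.
have neS : S !=set0 by exists (0 - `|0 - v|); exists 0, 0.
pose c := sup S.
have c_ge : forall u a, A (u,a) -> a - `|u - v| <= c.
  by move=> u a ha; apply: ub_le_sup => //; exists u, a.
have c_le : forall w b, A (w,b) -> c <= `|w + v| - b.
  move=> w b hb; apply: ge_sup => // z [u [a [ha ->]]]; exact: key ha hb.
pose A' := [set p | exists u a t, A (u,a) /\ p = (u + t *: v, a + t * c)].
have cA' : cond A'.
  split.
  - move=> w a1 a2 [u [a [t [ha E1]]]] [u' [a' [t' [ha' E2]]]].
    case: E1 => Ew Ea1; case: E2 => Ew' Ea2; subst a1 a2.
    have E : u + t *: v = u' + t' *: v by rewrite -Ew -Ew'.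
    have [tt|tt] := eqVneq t t'.
      subst t'; have uu : u = u' by apply: (addIr (t *: v)).
      by subst u'; rewrite (fA _ _ _ ha ha').
    exfalso; apply: nv; exists ((t - t')^-1 * (-1 * a + a') + 0).
    have -> : v = (t - t')^-1 *: (-1 *: u + u') + 0.
      rewrite addr0; apply: (@scalerI _ _ (t - t')); first by rewrite subr_eq0.
      rewrite scalerA divff ?subr_eq0 // scale1r scaleN1r scalerBl.
      by apply: (addrI u); rewrite !addrA E addrK addrN add0r.
    apply: (cA); last exact: A00.
    exact: (cA).
  - move=> k w1 a1 w2 a2 [u [a [t [ha [-> ->]]]]] [u' [a' [t' [ha' [-> ->]]]]].
    exists (k *: u + u'), (k * a + a'), (k * t + t'); split; first exact: (cA).
    congr pair; last by ring.
    by rewrite scalerDr scalerA addrACA -scalerDl.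
  - move=> w0 a1 [u [a [t [ha [-> ->]]]]].
    have [->|t0] := eqVneq t 0.
      by rewrite scale0r addr0 mul0r addr0; exact: dA.
    pose w := t^-1 *: u; pose b := t^-1 * a.
    have hw : A (w, b) by have := cA t^-1 _ _ _ _ ha A00; rewrite !addr0.
    have hw' : A (-w, -b).
      by have := cA (-1) _ _ _ _ hw A00; rewrite !addr0 scaleN1r mulN1r.
    have N : `|u + t *: v| = `|t| * `|w + v|.
      by rewrite -normrZ scalerDr /w scalerA divff // scale1r.
    have ea : a = t * b by rewrite /b mulrA divff // mul1r.
    have h1 := c_le _ _ hw. have h2 := c_ge _ _ hw'.
    have nn : `|-w - v| = `|w + v| by rewrite -opprD normrN.
    rewrite nn in h2; rewrite N ea.
    have := lt_total t0; case/orP => ts.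
      rewrite ltr0_norm //; nra.
    rewrite gtr0_norm //; nra.
have AA' : A `<=` A'.
  by move=> [u a] ha; exists u, a, 0; split => //; rewrite scale0r addr0 mul0r addr0.
apply: nv; exists c; apply: (hmax A' cA' AA').
by exists 0, 0, 1; split => //; rewrite scale1r add0r mul1r add0r.
Qed.

Lemma HB_exists : exists f : X -> R,
  (forall k u w, f (k *: u + w) = k * f u + f w) /\
  (forall v, `|f v| <= `|v|) /\ f x = `|x| /\ f y = 0.
Proof.
have [A [cA [BA hmax]]] := max_exists.
have tot := total_dom cA BA hmax.
pose f v := xget 0 [set r | A (v, r)].
have Af : forall v, A (v, f v) by move=> v; rewrite /f; exact: (xgetPex 0 (tot v)).
case: cA => fA cA dA.
exists f; split.
  by move=> k u w; apply: (fA _ _ _ (Af _)); apply: cA; exact: Af.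
split.
  move=> v; rewrite ler_norml (dA _ _ (Af v)) andbT.
  have := dA _ _ (cA (-1) _ _ _ _ (Af v) (Af 0)).
  have -> : f 0 = 0.
    by apply: (fA _ _ _ (Af 0)); apply: BA; exists 0, 0; rewrite !scale0r addr0 mul0r.
  rewrite !addr0 scaleN1r normrN mulN1r; lra.
split.
  apply: (fA _ _ _ (Af x)); apply: BA; exists 1, 0.
  by rewrite scale1r scale0r addr0 mul1r.
apply: (fA _ _ _ (Af y)); apply: BA; exists 0, 1.
by rewrite scale1r scale0r add0r mul0r.
Qed.

End HB.

Section Main.
Variables (R : realType) (X : normedModType R).

Definition islin (h : X -> R) := forall k u w, h (k *: u + w) = k * h u + h w.

Lemma lin0 h : islin h -> h 0 = 0.
Proof.
move=> hl; have := hl 1 0 0; rewrite scale1r addr0 mul1r; lra.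
Qed.

Lemma linZ h k u : islin h -> h (k *: u) = k * h u.
Proof. by move=> hl; have := hl k u 0; rewrite addr0 lin0 // addr0. Qed.

Lemma dual_le (h : X -> R) C : 0 <= C -> islin h -> (forall v, `|h v| <= C * `|v|) ->
  forall v, `|h v| <= dual_norm h * `|v|.
Proof.
move=> C0 hl hC v.
have [->|v0] := eqVneq v 0.
  by rewrite lin0 // !normr0 mulr0.
have nv : 0 < `|v| by rewrite normr_gt0.
pose w := `|v|^-1 *: v.
have nw : `|w| = 1.
  by rewrite /w normrZ ger0_norm ?invr_ge0 // mulVf // gt_eqF.
have ub : has_ubound [set `|h u| | u in [set u : X | `|u| <= 1]].
  exists C => _ [u hu <-]; apply: (le_trans (hC u)).
  by rewrite -[leRHS]mulr1; apply: ler_wpM2l.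
have hw : `|h w| <= dual_norm h.
  by apply: ub_le_sup => //; exists w => //; rewrite /= nw.
have -> : h v = `|v| * h w.
  by rewrite /w linZ // mulrA divff ?gt_eqF // mul1r.
by rewrite normrM ger0_norm ?normr_ge0 // mulrC ler_wpM2r.
Qed.

Lemma final (x y : X) (f : X -> R) e : 0 <= e -> islin f -> f x = `|x| ->
  (forall v, `|f v| <= `|v|) -> `|f y| <= e * `|y| -> BJ_orth_approx e x y.
Proof.
move=> e0 fl fx fb fy lam.
have h1 : f (x + lam *: y) <= `|x + lam *: y|.
  exact: le_trans (ler_norm _) (fb _).
rewrite addrC fl fx addrC in h1.
have h2 := ler_norm (- (lam * f y)); rewrite normrN normrM in h2.
rewrite normrZ.
have h3 : `|lam| * `|f y| <= `|lam| * (e * `|y|) by apply: ler_wpM2l.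
have n0 := normr_ge0 x. have k0 := normr_ge0 (x + lam *: y).
have d0 : 0 <= `|lam| * `|y| by apply: mulr_ge0.
set n := `|x| in n0 h1 *; set k := `|x + lam *: y| in k0 h1 *.
set d := `|lam| * `|y| in d0 *.
have hk : n - e * d <= k by rewrite /d; move: h1 h2 h3; rewrite /d; nra.
have [hp|hn] := leP 0 (n - e * d).
  have : (n - e * d) ^+ 2 <= k ^+ 2 by rewrite ler_sqr // nnegrE.
  nra.
nra.
Qed.

Lemma suppJ (x : X) (f : X -> R) : x != 0 -> islin f -> (forall v, `|f v| <= `|v|) ->
  f x = `|x| -> supp_funcs x f.
Proof.
move=> x0 fl fb fx; split; first by split; [exact: fl | exists 1 => v; rewrite mul1r].
split => //.
have ub : has_ubound [set `|f u| | u in [set u : X | `|u| <= 1]].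
  by exists 1 => _ [u hu <-]; exact: le_trans (fb u) hu.
apply/eqP; rewrite eq_le; apply/andP; split.
  apply: ge_sup; first by exists `|f 0|, 0 => //=; rewrite normr0.
  by move=> _ [u hu <-]; exact: le_trans (fb u) hu.
have nx : 0 < `|x| by rewrite normr_gt0.
apply: (ub_le_sup ub); exists (`|x|^-1 *: x).
  by rewrite /= normrZ ger0_norm ?invr_ge0 // mulVf // gt_eqF.
by rewrite linZ // fx mulVf ?gt_eqF // normr1.
Qed.

End Main.

Unset Implicit Arguments.
Set Strict Implicit.

Theorem theorem4p6 (R : realType) (X : normedModType R) (x y1 y2 : X) (eps : R) :
  x != 0 -> 0 <= eps -> eps < 2 -> eps_smooth x eps ->
  Num.min `|y1| `|y2| <= `|(2^-1 : R) *: (y1 + y2)| ->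
  BJ_orth x y1 -> BJ_orth x y2 ->
  BJ_orth_approx (eps / 2) x (y1 + y2).
Proof.
move=> x0 e0 e2 sm hmin o1 o2.
have [f1 [l1 [b1 [fx1 fy1]]]] := HB_exists x0 o1.
have [f2 [l2 [b2 [fx2 fy2]]]] := HB_exists x0 o2.
have J1 := suppJ x0 l1 b1 fx1.
have J2 := suppJ x0 l2 b2 fx2.
have diff : forall (f g : X -> R), islin f -> islin g -> (forall v, `|f v| <= `|v|) ->
    (forall v, `|g v| <= `|v|) -> supp_funcs x f -> supp_funcs x g ->
    forall v, `|f v - g v| <= eps * `|v|.
  move=> f g fl gl fb gb Jf Jg v.
  have hl : islin (fun v => f v - g v) by move=> k u w; rewrite fl gl; ring.
  have hb : forall v, `|f v - g v| <= 2 * `|v|.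
    move=> u; apply: (le_trans (ler_normB _ _)).
    by have := fb u; have := gb u; lra.
  apply: (le_trans (dual_le _ hl hb v)) => //.
  by apply: ler_wpM2r => //; exact: sm.
have ny : `|(2^-1 : R) *: (y1 + y2)| = 2^-1 * `|y1 + y2|.
  by rewrite normrZ ger0_norm // invr_ge0.
rewrite ny in hmin.
have e20 : 0 <= eps / 2 by rewrite divr_ge0.
have [h|h] := leP `|y1| `|y2|.
  rewrite min_l // in hmin.
  apply: (final e20 l2 fx2 b2).
  have -> : f2 (y1 + y2) = f2 y1 - f1 y1.
    by have := l2 1 y1 y2; rewrite scale1r mul1r fy2 fy1 !subr0 addr0.
  apply: (le_trans (diff _ _ l2 l1 b2 b1 J2 J1 y1)).
  rewrite mulrAC -mulrA; apply: ler_wpM2l => //.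
  by rewrite mulrC.
rewrite min_r in hmin; last exact: ltW.
apply: (final e20 l1 fx1 b1).
have -> : f1 (y1 + y2) = f1 y2 - f2 y2.
  by have := l1 1 y1 y2; rewrite scale1r mul1r fy2 fy1 !subr0 add0r.
apply: (le_trans (diff _ _ l1 l2 b1 b2 J1 J2 y2)).
rewrite mulrAC -mulrA; apply: ler_wpM2l => //.
by rewrite mulrC.
Qed.
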